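(* Let $G$ be a finite, connected, pointed, edge-ordered graph with distinguished vertex $v_0$. For any vertices $u,v,w$ with $u\prec_D v\prec_D w$, if $u\to w$, then there exists a vertex $v'$ with $u\preceq_D v'\prec_D v$ and $v'\to v$.
   Context: A (directed) graph is $(V,\to)$ with $\to\subseteq V\times V$; $N(u)$ is the set of outgoing edges of $u$. A pointed graph has a distinguished vertex $v_0$; connected means every vertex is reachable by a path from $v_0$. A path is a finite sequence $v_1\to\cdots\to v_n$ of vertices joined by edges; proper if no vertex repeats; co-initial paths share their source; $\pi\sqsubset\sigma$ means $\pi$ is a proper prefix of $\sigma$. A finite edge-ordered graph is a finite graph with a strict linear order $\triangleleft$ on each neighborhood. Lexicographic path order on co-initial paths: if $\pi\sqsubset\sigma$ then $\pi\prec\sigma$ (symmetrically); otherwise, with $\zeta$ the longest common prefix, $u$ its target and $v_1,v_2$ the next vertices, $\pi\prec\sigma$ iff $u\to v_1\triangleleft u\to v_2$. $\min(u\rightsquigarrow v)$ is the $\prec$-least proper path from $u$ to $v$. Define $v\prec_D w$ iff $\min(v_0\rightsquigarrow v)\prec\min(v_0\rightsquigarrow w)$, and $v\preceq_D w$ iff $v\prec_D w$ or $v=w$. *)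

(* Defs.v *)
From mathcomp Require Import all_boot.
Set Implicit Arguments. Unset Strict Implicit. Unset Printing Implicit Defensive.

(* A finite graph: vertex type V : finType, edge relation e : rel V
   (u -> v iff e u v).  The edge order: ord u a b means
   (u -> a) ◁ (u -> b) in the neighbourhood N(u). *)

Section EdgeOrdered.
Variables (V : finType) (e : rel V) (ord : V -> rel V).

Definition edge_ordered : Prop :=
  [/\ (forall u a, e u a -> ~~ ord u a a),
      (forall u a b c, e u a -> e u b -> e u c ->
          ord u a b -> ord u b c -> ord u a c) &
      (forall u a b, e u a -> e u b -> a != b -> ord u a b || ord u b a)].

(* A path v_1 -> ... -> v_n is represented as its source x and the
   sequence p = [:: v_2; ...; v_n] (so the path is x :: p).
   plt x s t : the path x :: s is lexicographically smaller than x :: t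
   (for co-initial paths). *)
Fixpoint plt (x : V) (s t : seq V) : bool :=
  match s, t with
  | [::], [::] => false
  | [::], _ :: _ => true
  | _ :: _, [::] => false
  | a :: s', b :: t' => if a == b then plt a s' t' else ord x a b
  end.

Definition proper_path (x y : V) (p : seq V) : bool :=
  [&& path e x p, uniq (x :: p) & last x p == y].

Definition is_min_path (x y : V) (p : seq V) : Prop :=
  proper_path x y p /\
  forall q, proper_path x y q -> q = p \/ plt x p q.

Definition precD (v0 v w : V) : Prop :=
  exists p q, [/\ is_min_path v0 v p, is_min_path v0 w q & plt v0 p q].

Definition preceqD (v0 v w : V) : Prop := precD v0 v w \/ v = w.

End EdgeOrdered.

(* Main.v *)
Require Import Defs.
From mathcomp Require Import all_boot.
Set Implicit Arguments. Unset Strict Implicit. Unset Printing Implicit Defensive.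

Section L.
Variables (V : finType) (e : rel V) (ord : V -> rel V).
Hypothesis Hord : edge_ordered e ord.
Local Notation plt := (plt ord).

Lemma plt_irr x s : plt x s s = false.
Proof. by elim: s x => [|a s IH] x //=; rewrite eqxx IH. Qed.

Lemma plt_prefix x s b t : plt x s (s ++ b :: t).
Proof. by elim: s x => [|a s IH] x //=; rewrite eqxx IH. Qed.

Lemma plt_diverge x s a b s1 t1 : a != b ->
  plt x (s ++ a :: s1) (s ++ b :: t1) = ord (last x s) a b.
Proof. move=> nab; elim: s x => [|c s IH] x /=; first by rewrite (negbTE nab).
by rewrite eqxx IH. Qed.

Lemma plt_cases x s t : plt x s t ->
  (exists b t', t = s ++ b :: t') \/
  (exists z a b s' t', [/\ s = z ++ a :: s', t = z ++ b :: t', a != b &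
       ord (last x z) a b]).
Proof.
elim: s x t => [|a s IH] x [|b t] //=.
  by move=> _; left; exists b, t.
case: eqP => [<-|/eqP nab] H.
  case: (IH _ _ H) => [[c [t' ->]]|[z [a' [b' [s' [t' [-> -> n o]]]]]]].
    by left; exists c, t'.
  by right; exists (a :: z), a', b', s', t'.
by right; exists [::], a, b, s, t.
Qed.

Lemma plt_trans x s t r : path e x s -> path e x t -> path e x r ->
  plt x s t -> plt x t r -> plt x s r.
Proof.
case: Hord => irr tr _.
elim: s x t r => [|a s IH] x [|b t] [|c r] //=.
case/andP=> ea ps /andP[eb pt] /andP[ec pr].
case: (eqVneq a b) => [eab|nab]; case: (eqVneq a c) => [eac|nac].
- subst b c; rewrite eqxx; exact: IH.
- subst b; rewrite (negbTE nac) => _ //.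
- subst c => o1; rewrite eq_sym (negbTE nab) => o2; by move: (irr _ _ ea); rewrite (tr _ _ _ _ ea eb ea o1 o2).
- move=> o1.
  case: eqP => [ebc|nbc o2]; first by subst c. 
  exact: tr o1 o2.
Qed.

Lemma plt_asym x s t : path e x s -> path e x t ->
  plt x s t -> plt x t s -> False.
Proof. move=> ps pt h1 h2; by move: (plt_trans ps pt ps h1 h2); rewrite plt_irr. Qed.

Lemma plt_total x s t : path e x s -> path e x t -> s != t ->
  plt x s t || plt x t s.
Proof.
case: Hord => _ _ tot.
elim: s x t => [|a s IH] x [|b t] //=.
case/andP=> ea ps /andP[eb pt] nst.
case: (eqVneq a b) => [eab|nab].
  subst b; apply: IH => //; apply: contra nst => /eqP->//.
by apply: tot.
Qed.

Lemma min_unique x y p q : is_min_path e ord x y p -> is_min_path e ord x y q -> p = q.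
Proof.
move=> [pp mp] [pq mq]; case: (mp q pq) => [//|h1]; case: (mq p pp) => [//|h2].
case/and3P: pp => pa _ _; case/and3P: pq => pb _ _.
by case: (plt_asym pa pb h1 h2).
Qed.

Lemma first_split (P : pred V) S : has P S ->
  exists S1 t S2, [/\ S = S1 ++ t :: S2, P t & ~~ has P S1].
Proof.
elim: S => [|a S IH] //= /orP[Pa|hS].
  by exists [::], a, S.
case: (boolP (P a)) => Pa; first by exists [::], a, S.
case: (IH hS) => S1 [t [S2 [-> Pt nh]]].
by exists (a :: S1), t, S2; rewrite /= (negbTE Pa).
Qed.

Lemma suffix_from (z y t : V) p2 : path e z p2 -> last z p2 = y ->
  uniq (z :: p2) -> t \in z :: p2 ->
  exists R, [/\ path e t R, last t R = y, uniq (t :: R) & {subset R <= p2}].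
Proof.
move=> pp ly up; rewrite inE; case: eqP => [->|_] /= tp.
  by exists p2; split => //; case/andP: up.
case/splitPr: tp pp ly up => L R.
rewrite cat_path last_cat /= => /andP[_ /andP[_ pR]] ly /andP[_].
rewrite cat_uniq => /and3P[_ _ uR].
exists R; split => // y0 yR; by rewrite mem_cat inE yR !orbT.
Qed.


Lemma min_prefix x y p1 p2 : is_min_path e ord x y (p1 ++ p2) ->
  is_min_path e ord x (last x p1) p1.
Proof.
move=> [/and3P[pP uP lP] mP].
move: (pP); rewrite cat_path => /andP[pp1 pp2].
move: (uP); rewrite -cat_cons cat_uniq => /and3P[up1 dis up2].
set z := last x p1.
have pr1 : proper_path e x z p1 by rewrite /proper_path pp1 up1 eqxx.
split => // q Hq.
case: (eqVneq q p1) => [->|nq]; first by left.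
case/and3P: (Hq) => pq uq /eqP lq.
case/orP: (plt_total pq pp1 nq) => [h|h]; last by right.
exfalso.
case: (plt_cases h) => [[b [t' ep]]|[zeta [a [b [s' [t' [eq ep nab o]]]]]]].
  move: up1; rewrite ep -cat_cons cat_uniq => /and3P[_ /hasPn H _].
  have zin : z \in b :: t' by rewrite /z ep last_cat /= mem_last.
  move: (H _ zin); rewrite -lq mem_last //.
have zp1 : z \in x :: p1 by rewrite mem_last.
have uz : uniq (z :: p2).
  rewrite /= up2 andbT; apply: contra dis => zp2; apply/hasP; by exists z.
have hS : has (mem (z :: p2)) (a :: s').
  apply/hasP; exists z; last exact: mem_head.
  by rewrite -lq eq last_cat /= mem_last.
case: (first_split hS) => S1 [t [S2 [eS tin nh]]].
have lz : last z p2 = y by apply/eqP; rewrite -last_cat.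
case: (suffix_from pp2 lz uz tin) => R [pR lR uR sR].
have [rest erest] : exists rest, S1 ++ t :: R = a :: rest.
  by case: S1 eS {nh} => [|c S1] /= [-> _]; [exists R | exists (S1 ++ t :: R)].
move: pq uq; rewrite eq eS => pq uq.
set r := zeta ++ S1 ++ t :: R.
have pr : path e x r.
  move: pq; rewrite /r !cat_path /= => /and3P[-> -> /andP[-> _]] /=.
  by rewrite pR.
have ur : uniq (x :: r).
  have -> : x :: r = (x :: zeta ++ S1 ++ [:: t]) ++ R by rewrite /r /= -!catA.
  move: uq; rewrite (_ : x :: zeta ++ S1 ++ t :: S2 = (x :: zeta ++ S1 ++ [:: t]) ++ S2);
    last by rewrite /= -!catA.
  rewrite !cat_uniq => /andP[-> _] /=.
  case/andP: uR => tR uR2; have uR3 : uniq R := uR2; rewrite uR3 andbT.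
  apply/hasPn => y0 y0R.
  have y0p2 := sR _ y0R.
  have ny0 : y0 \notin x :: p1 by apply: contra dis => h0; apply/hasP; exists y0.
  rewrite inE mem_cat mem_cat inE; apply/negP => /or4P[/eqP ey|hz|hS1|/eqP ey].
  - by move: ny0; rewrite ey inE eqxx.
  - by move: ny0; rewrite ep inE mem_cat hz orbT.
  - by move/hasPn: nh => /(_ _ hS1); rewrite /= inE y0p2 orbT.
  - by move: tR; rewrite -ey y0R.
have prr : proper_path e x y r by rewrite /proper_path pr ur /r !last_cat /= lR eqxx.
have hlt : plt x r (p1 ++ p2).
  by rewrite /r erest ep -catA cat_cons plt_diverge.
case: (mP r prr) => [er|h2].
  by move: hlt; rewrite er plt_irr.
exact: (plt_asym pP pr h2 hlt).
Qed.

End L.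

Theorem lemma10p2 (V : finType) (e : rel V) (ord : V -> rel V) (v0 : V)
  (Hord : edge_ordered e ord)
  (Hconn : forall v : V, connect e v0 v)
  (u v w : V) :
  precD e ord v0 u v -> precD e ord v0 v w -> e u w ->
  exists v' : V,
    [/\ preceqD e ord v0 u v', precD e ord v0 v' v & e v' v].
Proof.
move=> [pu [pv [mu mv hlt1]]] [pv2 [pw [mv2 mw hlt2]]] euw.
have epv := min_unique Hord mv2 mv; subst pv2; clear mv2.
case: (mu) => [/and3P[ppu uu /eqP lu] minu].
case: (mw) => [/and3P[ppw uw /eqP lw] minw].
case/lastP: pv mv hlt1 hlt2 => [|pp vv]; first by move=> _; case: (pu).
move=> mv hlt1 hlt2.
case: (mv) => [/and3P[ppv uv /eqP lv] minv].
move: lv; rewrite last_rcons => ev; subst vv.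
have mv' : is_min_path e ord v0 (last v0 pp) pp.
  by have := @min_prefix _ _ _ Hord v0 v pp [:: v]; rewrite cats1; apply.
exists (last v0 pp); split.
- case: (plt_cases hlt1) => [[b [t' et]]|[zeta [a [b [s' [t' [eu ev nab o]]]]]]].
    case/lastP: t' et => [|t'' c].
      rewrite cats1 => /rcons_inj [ep _]; subst pp; by right.
    rewrite -rcons_cons -rcons_cat => /rcons_inj [ep _]; subst pp.
    by left; exists pu, (pu ++ b :: t''); split => //; rewrite plt_prefix.
  case/lastP: t' ev => [|t'' c].
    rewrite cats1 => /rcons_inj [ep eb]; subst pp b.
    exfalso.
    have key : forall R, proper_path e v0 w R -> plt ord v0 R (rcons zeta v) -> False.
      move=> R pR hR; case/and3P: (pR) => pR' _ _.
      case: (minw R pR) => [eR|h].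
        subst R; exact: (plt_asym Hord ppv ppw hlt2 hR).
      exact: (plt_asym Hord ppv ppw hlt2 (plt_trans Hord ppw pR' ppv h hR)).
    case: (boolP (w \in v0 :: pu)) => [|wn].
      rewrite inE; case: eqP => [ew _|_ /= wp].
        apply: (key [::]); first by rewrite /proper_path /= ew eqxx.
        by case: (zeta).
      case/splitPr: wp ppu uu lu mu minu eu hlt1 => R1 R2 ppu uu lu mu minu eu hlt1.
      have pR : proper_path e v0 w (rcons R1 w).
        move: ppu uu; rewrite /proper_path last_rcons eqxx andbT.
        rewrite cat_path -cat_cons cat_uniq rcons_path -rcons_cons rcons_uniq => /andP[-> /andP[-> _]] /and3P[-> /hasPn H _]. by rewrite /= H // mem_head.
      apply: (key _ pR).
      case/lastP: R2 ppu uu lu mu minu eu hlt1 => [|R2 c] ppu uu lu mu minu eu hlt1.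
        by rewrite -cats1.
      apply: (plt_trans Hord _ ppu ppv _ hlt1); first by case/and3P: pR.
      rewrite -!cats1; case: (R2) => [|h t] /=; [have -> : R1 ++ [:: w; c] = (R1 ++ [:: w]) ++ c :: [::] by rewrite -catA | have -> : R1 ++ w :: h :: t ++ [:: c] = (R1 ++ [:: w]) ++ h :: t ++ [:: c] by rewrite -catA]; exact: plt_prefix.
    apply: (key (rcons pu w)).
      rewrite /proper_path rcons_path last_rcons eqxx lu euw ppu /= andbT.
      move: wn uu; rewrite inE negb_or => /andP[wv wp] /andP[v0p up]; have up2 : uniq pu := up; by rewrite mem_rcons inE negb_or rcons_uniq wp up2 v0p eq_sym wv.
    by rewrite eu rcons_cat /= -[rcons zeta v]cats1 plt_diverge.
  rewrite -rcons_cons -rcons_cat => /rcons_inj [ep _]; subst pp.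
  left; exists pu, (zeta ++ b :: t''); split => //.
  by rewrite eu plt_diverge.
- exists pp, (rcons pp v); split => //; by rewrite -cats1 plt_prefix.
- by move: ppv; rewrite rcons_path => /andP[_].
Qed.
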